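(* Let $q$ be a prime power and let $n,k,r$ be integers with $n<q$, $0<r<k\le n$, $r\mid k$, $(r+1)\mid n$ and $(r+1)\mid(q-1)$. Let $t=n-k-k/r$ and assume $t\ge 0$. Then there exists a linear $[n,k,t+2]$ code over $\mathbb F_q$ with addition based repair and all-symbol locality $r$. Since every linear $[n,k,d]$ code with information locality $r$ satisfies $d\le n-\lceil k/r\rceil-k+2=t+2$, this code is optimal in terms of distance.
   Context: For a linear $[n,k,d]$ code $\mathcal C$ over $\mathbb F_q$ (length $n$, dimension $k$, minimum distance $d$), the coordinates are called nodes and are indexed by $[n]=\{1,\dots,n\}$. A node $i$ has locality $r_i$ if there is a repair set $J_i\subseteq[n]\setminus\{i\}$ of size $r_i$ and a function $\phi_i:\mathbb F_q^{r_i}\to\mathbb F_q$ such that $\phi_i$ applied to $(c_j)_{j\in J_i}$ equals $c_i$ for all $\mathbf c\in\mathcal C$. $\mathcal C$ has all-symbol locality $r$ if every node has locality at most $r$. Information locality $r$ means that the information nodes have locality at most $r$. $\mathcal C$ has addition based repair if every node $i$ has such a repair set $J_i$ with repair function $\phi_i\big((c_j)_{j\in J_i}\big)=-\sum_{j\in J_i}c_j$, i.e. $c_i+\sum_{j\in J_i}c_j=0$ for all $\mathbf c\in\mathcal C$. *)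

(* Defs.v *)
From HB Require Import structures.
From mathcomp Require Import all_boot all_order all_algebra all_field.
Set Implicit Arguments. Unset Strict Implicit. Unset Printing Implicit Defensive.
Import GRing.Theory.
Local Open Scope ring_scope.

(* A linear code of length n over F is a subspace of row vectors 'rV[F]_n;
   nodes are the coordinates i : 'I_n (0-based indexing of [n]). *)

Definition wt (F : fieldType) (n : nat) (c : 'rV[F]_n) : nat :=
  #|[set i : 'I_n | c 0 i != 0]|.

Definition is_nkd_code (F : fieldType) (n : nat) (C : {vspace 'rV[F]_n})
  (k d : nat) : Prop :=
  \dim C = k /\
  (exists2 c, c \in C & (c != 0) && (wt c == d)) /\
  (forall c, c \in C -> c != 0 -> (d <= wt c)%N).

Definition node_locality_le (F : fieldType) (n : nat) (C : {vspace 'rV[F]_n})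
  (i : 'I_n) (r : nat) : Prop :=
  exists (J : {set 'I_n}) (phi : seq F -> F),
    [/\ i \notin J, (#|J| <= r)%N &
        forall c, c \in C -> phi [seq c 0 j | j <- enum J] = c 0 i].

Definition all_symbol_locality (F : fieldType) (n : nat)
  (C : {vspace 'rV[F]_n}) (r : nat) : Prop :=
  forall i : 'I_n, node_locality_le C i r.

Definition addition_based_repair (F : fieldType) (n : nat)
  (C : {vspace 'rV[F]_n}) (r : nat) : Prop :=
  forall i : 'I_n, exists J : {set 'I_n},
    [/\ i \notin J, (#|J| <= r)%N &
        forall c, c \in C -> c 0 i + \sum_(j in J) c 0 j = 0].

(* Main.v *)
Require Import Defs.
From HB Require Import structures.
From mathcomp Require Import all_boot all_order all_algebra all_field.
From mathcomp Require Import all_solvable zify.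
Set Implicit Arguments. Unset Strict Implicit. Unset Printing Implicit Defensive.
Import GRing.Theory.


Lemma expo_lt (a b M R1 Q m : nat) : (a < m)%N -> (m <= M)%N -> (b < R1)%N -> Q = (M * R1)%N -> (a + b * M < Q)%N.
Proof. move=> h1 h2 h3 ->. nia. Qed.

Lemma arith1 s j r K : (j < r -> s*(r.+1) + j + 2 < K*r + K -> s*r + j + 2 <= K*r)%N.
Proof. move=> h1 h2. have : (s < K)%N by nia. move=> h3. nia. Qed.
Lemma arith2 i r K n : (0 < r -> i + 2 <= K * r -> K*r + K <= n -> i %/ r * r.+1 + i %% r < n)%N.
Proof. move=> h0 h1 h2. have := ltn_pmod i h0. have : (i %/ r < K)%N by rewrite ltn_divLR //; lia.
have := divn_eq i r. move: (i %/ r) (i %% r) => a b. nia. Qed.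

Section Constr.
Variables (F : finFieldType) (n k r : nat).
Hypotheses (hnq : (n < #|F|)%N) (hr0 : (0 < r)%N) (hrk : (r < k)%N)
  (hkn : (k <= n)%N) (hrdk : (r %| k)%N) (hr1n : (r.+1 %| n)%N)
  (hr1q : (r.+1 %| #|F|.-1)%N) (hkK : (k + k %/ r <= n)%N).
Variable w : F.
Hypothesis wprim : ((#|F|.-1).-primitive_root w)%R.

Local Notation R1 := r.+1.
Local Notation K := (k %/ r)%N.
Local Notation m := (n %/ r.+1)%N.
Local Notation N := (#|F|.-1).
Local Notation M := (#|F|.-1 %/ r.+1)%N.

Lemma kE : k = (K * r)%N. Proof. by rewrite divnK. Qed.
Lemma nE : n = (m * R1)%N. Proof. by rewrite divnK. Qed.
Lemma NE : N = (M * R1)%N. Proof. by rewrite divnK. Qed.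
Lemma m_le_M : (m <= M)%N.
Proof. apply: leq_div2r. have := hnq. lia. Qed.
Lemma m_gt0 : (0 < m)%N.
Proof. rewrite divn_gt0 //. lia. Qed.
Lemma K_gt1 : (1 < K)%N.
Proof. have := kE. have := hrk. nia. Qed.

Definition alpha (l : 'I_n) : F := (w ^+ (l %/ R1 + (l %% R1) * M))%R.

Lemma alpha_neq0 l : (alpha l != 0)%R.
Proof. by rewrite expf_neq0 // (prim_root_eq0 wprim); have := hnq; lia. Qed.

Lemma alpha_inj : injective alpha.
Proof.
move=> l l'; rewrite /alpha => /eqP; rewrite (eq_prim_root_expr wprim).
have hl := ltn_ord l; have hl' := ltn_ord l'.
have hs : (l %/ R1 < m)%N by rewrite ltn_divLR // -nE.
have hs' : (l' %/ R1 < m)%N by rewrite ltn_divLR // -nE.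
have hj := ltn_pmod l (ltn0Sn r); have hj' := ltn_pmod l' (ltn0Sn r).
have hmM := m_le_M; have NEq := NE.
rewrite (modn_small (expo_lt hs hmM hj NEq)) (modn_small (expo_lt hs' hmM hj' NEq)).
move/eqP=> e.
have e1 : (l %/ R1 = l' %/ R1)%N.
  have := congr1 (modn^~ M) e; rewrite !(addnC (_ %/ R1)) !modnMDl !modn_small //; lia.
have e2 : (l %% R1 = l' %% R1)%N.
  rewrite e1 in e; move/addnI: e => /eqP; rewrite eqn_pmul2r; first by move/eqP.
  lia.
apply: val_inj => /=; rewrite (divn_eq l R1) (divn_eq l' R1) e1 e2 //.
Qed.


Definition gi (l : 'I_n) (j : 'I_R1) : 'I_n := insubd l (l %/ R1 * R1 + j).

Lemma gi_val l j : (gi l j : nat) = (l %/ R1 * R1 + j)%N.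
Proof.
rewrite val_insubd; case: ifP => // /negP []; have hl := ltn_ord l.
have hs : (l %/ R1 < m)%N by rewrite ltn_divLR // -nE.
have hj := ltn_ord j; have := nE; nia.
Qed.

Lemma gi_inj l : injective (gi l).
Proof. by move=> j j' /(congr1 (@nat_of_ord n)); rewrite !gi_val => /addnI /val_inj. Qed.

Lemma gi_div l j : ((gi l j) %/ R1 = l %/ R1)%N.
Proof. by rewrite gi_val divnMDl // (divn_small (ltn_ord j)) addn0. Qed.

Lemma gi_mod l j : ((gi l j) %% R1 = j)%N.
Proof. by rewrite gi_val modnMDl (modn_small (ltn_ord j)). Qed.

Definition zeta : F := (w ^+ M)%R.

Lemma zprim : (R1.-primitive_root zeta)%R.
Proof. exact (dvdn_prim_root wprim hr1q). Qed.

Lemma alpha_gi l j : alpha (gi l j) = (w ^+ (l %/ R1) * zeta ^+ j)%R.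
Proof. by rewrite /alpha gi_div gi_mod GRing.exprD /zeta -GRing.exprM mulnC. Qed.

Lemma sum_zeta e : ~~ (R1 %| e) -> (\sum_(j < R1) (zeta ^+ e) ^+ j = 0)%R.
Proof.
move=> nd; have h := GRing.subrX1 (zeta ^+ e) R1.
rewrite GRing.exprAC (prim_expr_order zprim) GRing.expr1n GRing.subrr in h.
move/esym/eqP: h; rewrite GRing.mulf_eq0 => /orP [|/eqP //].
rewrite GRing.subr_eq0 -(GRing.expr0 zeta) (eq_prim_root_expr zprim) mod0n.
by move=> h; case/negP: nd; rewrite /dvdn.
Qed.

Lemma group_sum l e : ~~ (R1 %| e) ->
  (\sum_(j < R1) alpha (gi l j) ^+ e = 0)%R.
Proof.
move=> nd; under eq_bigr do rewrite alpha_gi GRing.exprMn (GRing.exprAC zeta).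
by rewrite -GRing.mulr_sumr sum_zeta // GRing.mulr0.
Qed.

Definition G (l : 'I_n) : {set 'I_n} := [set gi l j | j : 'I_R1].

Lemma mem_G l : l \in G l.
Proof.
apply/imsetP; exists (inord (l %% R1)) => //; apply: val_inj.
by rewrite /= gi_val inordK ?ltn_pmod // -divn_eq.
Qed.

Lemma card_G l : #|G l| = R1.
Proof. by rewrite card_imset ?card_ord //; apply: gi_inj. Qed.

Definition ex' (i : 'I_k) : nat := (i %% r + R1 * (i %/ r))%N.

Definition X : k.-tuple 'rV[F]_n :=
  mktuple (fun t : 'I_k => (\row_(l < n) alpha l ^+ (ex' t).+1)%R).

Definition C : {vspace 'rV[F]_n} := <<X>>%VS.

Lemma X_nth (t : 'I_k) : (X`_t)%R = (\row_(l < n) alpha l ^+ (ex' t).+1)%R.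
Proof. by rewrite /X nth_mktuple. Qed.

Lemma ex_ndvd i : ~~ (R1 %| (ex' i).+1).
Proof.
rewrite /ex' -addSn dvdn_addl ?dvdn_mulr //.
by rewrite gtnNdvd // ltnS ltn_pmod.
Qed.

Lemma coord_eval c : c \in C -> forall l,
  c 0%R l = (\sum_i coord X i c * alpha l ^+ (ex' i).+1)%R.
Proof.
move=> /coord_span {1}-> l; rewrite summxE; apply: eq_bigr => i _.
by rewrite mxE X_nth mxE.
Qed.

Lemma group_sum_C c l : c \in C -> (\sum_(l' in G l) c 0%R l' = 0)%R.
Proof.
move=> cC; rewrite big_imset /=; last by move=> ? ? _ _; apply: gi_inj.
under eq_bigr do rewrite (coord_eval cC).
rewrite exchange_big /=; apply: big1 => i _.
by rewrite -GRing.mulr_sumr group_sum ?GRing.mulr0 // ex_ndvd.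
Qed.

Definition J (l : 'I_n) := G l :\ l.

Lemma card_J l : #|J l| = r.
Proof. by have := cardsD1 l (G l); rewrite mem_G card_G /J => -[]. Qed.

Lemma repair c l : c \in C -> (c 0%R l + \sum_(j in J l) c 0%R j = 0)%R.
Proof.
move=> cC; rewrite -[RHS](group_sum_C l cC) (bigD1 l (mem_G l)); congr (_ + _)%R.
by apply: eq_bigl => j; rewrite in_setD1 andbC.
Qed.


Lemma ex'_inj : injective ex'.
Proof.
move=> t t'; rewrite /ex' => e.
have ht := ltn_pmod t hr0; have ht' := ltn_pmod t' hr0.
have e1 : @eq nat (t %% r) (t' %% r).
  have := congr1 (modn^~ R1) e; rewrite /= !(addnC (_ %% r)) !(mulnC R1) !modnMDl.
  by rewrite (modn_small (ltn_trans ht (ltnSn r))) (modn_small (ltn_trans ht' (ltnSn r))).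
rewrite e1 in e; move/addnI: e => /eqP; rewrite eqn_mul2l /= => /eqP e2.
by apply: val_inj; rewrite /= (divn_eq t r) (divn_eq t' r) e1 e2.
Qed.

Lemma ex'_bound t : (ex' t + 2 <= k + K)%N.
Proof.
rewrite /ex'; have ht := ltn_pmod t hr0.
have hq : (t %/ r < K)%N by rewrite ltn_divLR // -kE.
have := kE; nia.
Qed.

Lemma zeros_bound (a : 'I_k -> F) : (exists t, a t != 0)%R ->
  (#|[set l | (\sum_t a t *: X`_t)%R 0%R l == 0%R]| + 2 <= k + K)%N.
Proof.
move=> [t0 ht0].
set c := (\sum_t a t *: X`_t)%R.
set g : {poly F} := (\sum_t a t *: 'X^(ex' t))%R.
have ceval l : c 0%R l = (alpha l * g.[alpha l])%R.
  rewrite /c summxE horner_sum GRing.mulr_sumr; apply: eq_bigr => t _.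
  by rewrite mxE X_nth mxE hornerZ hornerXn GRing.exprS GRing.mulrCA.
have gnz : g != 0%R.
  apply/eqP => g0; move/negP: ht0; apply; apply/eqP; have := congr1 (fun p : {poly F} => p`_(ex' t0))%R g0.
  rewrite coef0 coef_sum (bigD1 t0) //= coefZ coefXn eqxx GRing.mulr1 big1 ?GRing.addr0 //.
  move=> t tt0; rewrite coefZ coefXn (inj_eq ex'_inj) eq_sym (negbTE tt0).
  by rewrite GRing.mulr0.
have gsz : (size g <= (k + K).-1)%N.
  apply/leq_sizeP => j hj; rewrite coef_sum big1 // => t _.
  rewrite coefZ coefXn; have := ex'_bound t.
  have -> : (j == ex' t) = false.
    by apply/negbTE/eqP => e; move: hj (ex'_bound t); rewrite e; lia.
  by rewrite GRing.mulr0.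
set Z := [set l | c 0%R l == 0%R].
have := @max_poly_roots _ g [seq alpha l | l <- enum Z] gnz.
rewrite size_map -cardE map_inj_uniq ?enum_uniq; last exact: alpha_inj.
have -> : all (root g) [seq alpha l | l <- enum Z].
  apply/allP => x /mapP [l]; rewrite mem_enum inE => /eqP cl ->.
  move: cl; rewrite ceval => /eqP; rewrite GRing.mulf_eq0 (negbTE (alpha_neq0 l)) /=.
  by rewrite /root.
move=> /(_ isT isT) h; move: gsz h; have := K_gt1; move: (#|Z|) (size g) (k %/ r) => x y z; lia.
Qed.


Lemma X_free : free X.
Proof.
apply/freeP => a ha t; apply/eqP/negP => /negP ht.
have := zeros_bound (ex_intro _ t ht); rewrite ha.
have -> : [set l : 'I_n | (0 : 'rV[F]_n)%R 0%R l == 0%R] = [set: 'I_n].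
  by apply/setP => l; rewrite !inE mxE eqxx.
rewrite cardsT card_ord; have := hkK; lia.
Qed.

Lemma dimC : \dim C = k.
Proof. by rewrite /C (eqP X_free) size_tuple. Qed.

Lemma wtE (c : 'rV[F]_n) : wt c = (n - #|[set l | c 0%R l == 0%R]|)%N.
Proof.
rewrite /wt; have -> : [set i | c 0%R i != 0%R] = ~: [set l | c 0%R l == 0%R].
  by apply/setP => l; rewrite !inE.
by rewrite cardsCs setCK card_ord.
Qed.

Lemma dist (c : 'rV[F]_n) : c \in C -> c != 0%R -> (n - k - K + 2 <= wt c)%N.
Proof.
move=> cC cn0; have cE := coord_span cC.
case: (pickP (fun t => coord X t c != 0%R)) => [t ht | h0]; last first.
  case/negP: cn0; apply/eqP; rewrite cE; apply: big1 => t _.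
  by move/negbFE/eqP: (h0 t) => ->; rewrite GRing.scale0r.
have /= := @zeros_bound (fun t => coord X t c) (ex_intro _ t ht); rewrite -cE wtE.
have := hkK; move: (#|_|) => x; lia.
Qed.


Lemma n_gt0 : (0 < n)%N. Proof. by have := hrk; have := hkn; lia. Qed.
Definition n0 : 'I_n := Ordinal n_gt0.
Definition zz (i : 'I_k.-1) : 'I_n := insubd n0 (i %/ r * R1 + i %% r).

Lemma zz_val i : (zz i : nat) = (i %/ r * R1 + i %% r)%N.
Proof.
rewrite val_insubd (arith2 (K := K)) //.
  by have := ltn_ord i; have := kE; have := K_gt1; lia.
by have := kE; have := hkK; lia.
Qed.

Definition P : 'M[F]_(n, k.-1) := (\matrix_(l, z) (l == zz z)%:R)%R.
Definition f : 'Hom('rV[F]_n, 'rV[F]_k.-1) := linfun (@mulmxr F 1 n k.-1 P).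

Lemma fE c z : f c 0%R z = c 0%R (zz z).
Proof.
rewrite lfunE /= mxE (bigD1 (zz z)) //= mxE eqxx GRing.mulr1 big1 ?GRing.addr0 //.
by move=> l hl; rewrite mxE (negbTE hl) GRing.mulr0.
Qed.

Lemma exists_c0 : exists2 c, c \in C & (c != 0%R) && [forall z, c 0%R (zz z) == 0%R].
Proof.
have h := limg_ker_dim f C; rewrite dimC in h.
have hd : (\dim (f @: C) <= k.-1)%N.
  by apply: leq_trans (dimvS (subvf _)) _; rewrite dimvf dim_matrix GRing.mul1r.
have : (C :&: lker f != 0)%VS.
  rewrite -dimv_eq0; move: h hd; move: (\dim (f @: C)) (\dim (C :&: lker f)) => a b; lia.
rewrite -vpick0 => hnz; have := memv_pick (C :&: lker f); rewrite memv_cap => /andP [h1 h2].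
exists (vpick (C :&: lker f)) => //; rewrite hnz /=; apply/forallP => z.
by rewrite -fE; move: h2; rewrite memv_ker => /eqP ->; rewrite mxE.
Qed.

Lemma vanish1 (c : 'rV[F]_n) : (forall z, c 0%R (zz z) = 0%R) -> forall l : 'I_n,
  (l + 2 < k + K)%N -> (l %% R1 < r)%N -> c 0%R l = 0%R.
Proof.
move=> hz l hl hj.
have hi : (l %/ R1 * r + l %% R1 < k.-1)%N.
  have := @arith1 (l %/ R1) (l %% R1) r K hj.
  have := divn_eq l R1; have := kE; move: (l %/ R1) (l %% R1) => x y; lia.
have -> : l = zz (Ordinal hi).
  apply: val_inj; rewrite /= zz_val /= divnMDl // (divn_small hj) addn0.
  by rewrite modnMDl (modn_small hj) -divn_eq.
exact: hz.
Qed.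

Lemma vanish (c : 'rV[F]_n) : c \in C -> (forall z, c 0%R (zz z) = 0%R) -> forall l : 'I_n,
  (l + 2 < k + K)%N -> c 0%R l = 0%R.
Proof.
move=> cC hz l hl; case: (ltnP (l %% R1) r) => hj; first exact: vanish1.
have hjr : (l %% R1 = r)%N by have := ltn_pmod l (ltn0Sn r); lia.
have := repair l cC; rewrite big1 ?GRing.addr0 // => j'.
rewrite in_setD1 => /andP [hne /imsetP [jj _ ej]]; subst j'.
have hjj : (jj < r)%N.
  have := ltn_ord jj; rewrite ltnS leq_eqVlt => /orP [/eqP e|//].
  case/negP: hne; apply/eqP; apply: val_inj; rewrite /= gi_val e; symmetry; by rewrite {1}(divn_eq l R1) hjr.
apply: vanish1 => //; last by rewrite gi_mod.
rewrite gi_val; move: hl; rewrite {1}(divn_eq l R1) hjr; lia.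
Qed.

Lemma exact_wt : exists2 c, c \in C & (c != 0%R) && (wt c == (n - k - K + 2)%N).
Proof.
have [c cC /andP [cn0 /forallP hz]] := exists_c0.
exists c => //; rewrite cn0 /= eqn_leq dist // andbT wtE.
have hL : ((k + K).-2 <= n)%N by have := hkK; lia.
have winj : injective (widen_ord hL) by move=> i j /(congr1 val) /= /val_inj.
have hsub : [set widen_ord hL i | i : 'I_(k + K).-2] \subset [set l | c 0%R l == 0%R].
  apply/subsetP => x /imsetP [i _ ->]; rewrite inE; apply/eqP.
  apply: (vanish cC) => [z|]; first exact/eqP.
  by have := ltn_ord i; rewrite /=; have := K_gt1; lia.
have := subset_leq_card hsub; rewrite card_imset // card_ord.
have := K_gt1; have := hkK; move: (#|_|) => x; lia.
Qed.


Lemma main : exists C : {vspace 'rV[F]_n},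
    [/\ is_nkd_code C k ((n - k - k %/ r) + 2)%N,
        all_symbol_locality C r &
        addition_based_repair C r].
Proof.
have hrep : addition_based_repair C r.
  move=> i; exists (J i); split; first by rewrite in_setD1 eqxx.
    by rewrite card_J.
  by move=> c cC; apply: repair.
exists C; split => //.
  split; first exact: dimC.
  split; first exact: exact_wt.
  exact: dist.
move=> i; exists (J i), (fun s => - \sum_(x <- s) x)%R; split.
- by rewrite in_setD1 eqxx.
- by rewrite card_J.
move=> c cC; rewrite big_map big_enum /=; apply/esym/eqP.
by rewrite -GRing.addr_eq0 repair.
Qed.

End Constr.

Theorem theorem5 (F : finFieldType) (n k r : nat) :
  (n < #|F|)%N -> (0 < r)%N -> (r < k)%N -> (k <= n)%N ->
  (r %| k)%N -> (r.+1 %| n)%N -> (r.+1 %| #|F|.-1)%N ->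
  (k + k %/ r <= n)%N ->
  exists C : {vspace 'rV[F]_n},
    [/\ is_nkd_code C k ((n - k - k %/ r) + 2)%N,
        all_symbol_locality C r &
        addition_based_repair C r].
Proof.
move=> hnq hr0 hrk hkn hrdk hr1n hr1q hkK.
have : has (#|F|.-1).-primitive_root%R (enum (predC1 (0%R : F))).
  apply: has_prim_root.
  - by have := hnq; have := hkn; have := hrk; lia.
  - apply/allP => x; rewrite mem_enum /= => hx; rewrite unity_rootE.
    have hF : (0 < #|F|)%N by have := hnq; lia.
    have := expf_card x; rewrite -(prednK hF).
    rewrite GRing.exprS -{3}(GRing.mulr1 x) => /(GRing.mulfI hx) ->.
    by [].
  - exact: enum_uniq.
  - by rewrite -cardE cardC1.
case/hasP => w _ wprim.
exact: (main hnq hr0 hrk hkn hrdk hr1n hr1q hkK wprim).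
Qed.
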